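(* Let $G$ be a connected graph with a pair $\{v_i,v_j\}$ of order $h$ and associated vector $S=(s_1,\dots,s_n)^t$. Let $G'$ be a subgraph of $G$ all of whose vertices have the same weight, and let $\tilde G$ be the graph obtained from $G$ by removing all edges of $G'$. If $\tilde G$ is not connected, then $v_i$ and $v_j$ belong to the same connected component of $\tilde G$.
   Context: Graphs are finite, may have multiple edges, no loops. For $G$ with vertices $v_1,\dots,v_n$ let $c_{ij}$ ($i\neq j$) be the number of edges joining $v_i,v_j$, $c_{ii}=-\sum_{j\ne i}c_{ij}$, $M(G)=(c_{ij})$. For an integer $h>0$, a pair $\{v_i,v_j\}$ has order $h$ if there is $S=(s_1,\dots,s_n)^t\in\mathbb{Z}^n$ with $M(G)S=h(e_i-e_j)$ and $\gcd(s_1-s_n,\dots,s_{n-1}-s_n)=1$; the weight of $v_k$ is $s_k$. *)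

(* Defs.v *)
From HB Require Import structures.
From mathcomp Require Import all_boot all_order all_algebra.
Set Implicit Arguments. Unset Strict Implicit. Unset Printing Implicit Defensive.
Import Order.TTheory GRing.Theory Num.Theory.
Local Open Scope ring_scope.

(* A finite multigraph without loops on the vertex set 'I_m, given by its
   edge-multiplicity function c (c u v = number of edges joining u and v). *)
Definition multigraph (m : nat) (c : 'I_m -> 'I_m -> nat) : Prop :=
  (forall u v, c u v = c v u) /\ (forall u, c u u = 0%N).

Definition adj (m : nat) (c : 'I_m -> 'I_m -> nat) : rel 'I_m :=
  fun u v => (0 < c u v)%N.

Definition connected_mg (m : nat) (c : 'I_m -> 'I_m -> nat) : Prop :=
  forall u v : 'I_m, connect (adj c) u v.

Definition Mmat (m : nat) (c : 'I_m -> 'I_m -> nat) : 'M[int]_m :=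
  \matrix_(k, l) (if k == l then - (\sum_(l' | l' != k) (c k l')%:Z)
                  else (c k l)%:Z).

Definition evec (m : nat) (i : 'I_m) : 'cV[int]_m := delta_mx i 0.

(* The pair {v_i, v_j} has order h with associated vector S (vertices are
   'I_(n.+1), the last vertex v_n being ord_max):
   M(G) S = h (e_i - e_j) and gcd(s_1 - s_n, ..., s_{n-1} - s_n) = 1. *)
Definition pair_of_order (n : nat) (c : 'I_n.+1 -> 'I_n.+1 -> nat)
    (i j : 'I_n.+1) (h : nat) (S : 'cV[int]_n.+1) : Prop :=
  (0 < h)%N /\
  Mmat c *m S = h%:Z *: (evec i - evec j) /\
  \big[gcdz/0]_(k : 'I_n.+1 | k != ord_max) (S k 0 - S ord_max 0) = 1.

(* Main.v *)
Require Import Defs.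
From HB Require Import structures.
From mathcomp Require Import all_boot all_order all_algebra.
Import Order.TTheory GRing.Theory Num.Theory.
Local Open Scope ring_scope.

Lemma MS_row (m : nat) (c : 'I_m -> 'I_m -> nat) (S : 'cV[int]_m) k :
  (Mmat c *m S) k 0 = \sum_l (c k l)%:Z * (S l 0 - S k 0).
Proof.
rewrite mxE (bigD1 k) //= [RHS](bigD1 k) //= subrr mulr0 add0r.
rewrite !mxE eqxx mulNr mulr_suml -sumrN -big_split /=.
apply: eq_bigr => l lk; rewrite !mxE eq_sym (negbTE lk) mulrBr addrC.
by [].
Qed.

Theorem lemma1p10 (n : nat) (c : 'I_n.+1 -> 'I_n.+1 -> nat)
    (i j : 'I_n.+1) (h : nat) (S : 'cV[int]_n.+1)
    (c' : 'I_n.+1 -> 'I_n.+1 -> nat) (V' : {set 'I_n.+1}) :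
  multigraph c ->
  connected_mg c ->
  i != j ->
  pair_of_order c i j h S ->
  (* G' = (V', c') is a subgraph of G *)
  multigraph c' ->
  (forall u v, (c' u v <= c u v)%N) ->
  (forall u v, (0 < c' u v)%N -> u \in V' /\ v \in V') ->
  (* all vertices of G' have the same weight *)
  (forall u v, u \in V' -> v \in V' -> S u 0 = S v 0) ->
  (* G~ = G minus the edges of G' is not connected *)
  ~ connected_mg (fun u v => (c u v - c' u v)%N) ->
  connect (adj (fun u v => (c u v - c' u v)%N)) i j.
Proof.
move=> [csym _] _ ij [hpos [HM _]] _ cle cV' SV' _.
set e := adj _.
apply/negPn/negP => Nij.
pose C := [set k | connect e i k].
pose f k l := (c k l)%:Z * (S l 0 - S k 0).
have iC : i \in C by rewrite inE connect0.
have jC : j \notin C by rewrite inE.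
have out k l : k \in C -> l \notin C -> f k l = 0.
  move=> kC lC.
  have : ~~ e k l.
    apply: contra lC => ekl; rewrite inE in kC *.
    rewrite inE; apply: (connect_trans kC); exact: connect1.
  rewrite /e /adj -leqNgt leqn0 subn_eq0 => H.
  have E : c k l = c' k l by apply/eqP; rewrite eqn_leq H cle.
  rewrite /f E; case: (posnP (c' k l)) => [->|p]; first by rewrite mul0r.
  by have [kV lV] := cV' _ _ p; rewrite (SV' _ _ kV lV) subrr mulr0.
have inner : \sum_(k in C) \sum_(l in C) f k l = 0.
  set T := (X in X = 0).
  have : T = - T.
    rewrite {1}/T exchange_big /= -sumrN; apply: eq_bigr => k _.
    rewrite -sumrN; apply: eq_bigr => l _.
    by rewrite /f csym -mulrN opprB.
  move/eqP; rewrite -subr_eq0 opprK -mulr2n mulrn_eq0 /= => /eqP //.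
have tot : \sum_(k in C) (Mmat c *m S) k 0 = 0.
  rewrite (eq_bigr (fun k => \sum_l f k l)); last by move=> k _; rewrite MS_row.
  rewrite -[RHS]inner; apply: eq_bigr => k kC.
  rewrite (bigID (fun l => l \in C)) /= [X in _ + X]big1 ?addr0 //.
  by move=> l lC; apply: out.
move: tot; rewrite HM (bigD1 i) //= big1.
  rewrite !mxE eqxx (negbTE ij) /= addr0 subr0 mulr1 => /eqP.
  by move=> /eqP [] h0; rewrite h0 in hpos.
move=> k /andP [kC ki]; rewrite !mxE (negbTE ki).
have -> : (k == j) = false by apply/negP => /eqP kj; rewrite -kj kC in jC.
by rewrite subrr mulr0.
Qed.
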